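(* Let $(X,\mathcal{O}(X))$ be a measurable space, $\mathcal{A}$ a unital $C^*$-algebra and $\mathcal{H}$ a Hilbert space. Every spectral instrument $\mathcal{I}:\mathcal{O}(X)\to CP(\mathcal{A},\mathcal{B}(\mathcal{H}))$ is a $C^*$-extreme point of $I_{\mathcal{H}}(X,\mathcal{A})$.
   Context: A CP instrument is a map $\mathcal{I}$ from $\mathcal{O}(X)$ to the completely positive maps $\mathcal{A}\to\mathcal{B}(\mathcal{H})$ such that for all $a\in\mathcal{A}$, $h,k\in\mathcal{H}$, $A\mapsto\langle h,\mathcal{I}(A)(a)k\rangle$ is a countably additive complex measure. It is UCP if $\mathcal{I}(X)(1_\mathcal{A})=I_\mathcal{H}$; $I_{\mathcal{H}}(X,\mathcal{A})$ is the set of UCP instruments. It is spectral if it is UCP and $\mathcal{I}(A)$ is a $*$-homomorphism for every $A\in\mathcal{O}(X)$. $\mathcal{I}$ is $C^*$-extreme if whenever $\mathcal{I}(\cdot)=\sum_{i=1}^nT_i^*\mathcal{I}_i(\cdot)T_i$ with $\mathcal{I}_i\in I_{\mathcal{H}}(X,\mathcal{A})$ and invertible $T_i\in\mathcal{B}(\mathcal{H})$, $\sum T_i^*T_i=I_\mathcal{H}$, there are unitaries $U_i$ with $\mathcal{I}_i(\cdot)=U_i^*\mathcal{I}(\cdot)U_i$ for all $i$. *)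

(* Defs.v *)
From HB Require Import structures.
From mathcomp Require Import all_boot all_order all_algebra.
From mathcomp Require Import complex.
From mathcomp Require Import classical_sets reals measure.

Set Implicit Arguments.
Unset Strict Implicit.
Unset Printing Implicit Defensive.

Import Order.TTheory GRing.Theory Num.Theory.
Local Open Scope ring_scope.
Local Open Scope classical_set_scope.

(* Complex numbers are R[i] for R : realType.  The (partial) order of the
   numClosedField R[i] is used: [0 <= z] means z is real and nonnegative,
   [x <= y] for real x, y is the usual order. *)

Section Defs.
Variable R : realType.
Local Notation C := (R[i]).

Definition series_to (u : nat -> C) (l : C) : Prop :=
  forall e : C, 0 < e -> exists N : nat, forall n : nat, (N <= n)%N ->
    `| \sum_(i < n) u i - l | < e.

(* A is a unital complex algebra (algType), [star] the involution and
   [nA] the norm (values in C, required real nonnegative). *)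
Section CStar.
Variable A : algType C.
Variables (star : A -> A) (nA : A -> C).

Definition unital_Cstar_algebra : Prop :=
  ([/\ (forall a, star (star a) = a),
      (forall a b, star (a + b) = star a + star b),
      (forall (c : C) a, star (c *: a) = (c^*) *: star a) &
      (forall a b, star (a * b) = star b * star a)]) /\
  ([/\ (forall a, 0 <= nA a),
      (forall a, nA a = 0 -> a = 0),
      (forall a b, nA (a + b) <= nA a + nA b),
      (forall (c : C) a, nA (c *: a) = `|c| * nA a) &
      (forall a b, nA (a * b) <= nA a * nA b)]) /\
  (forall a, nA (star a * a) = nA a ^+ 2) /\
  (forall u : nat -> A,
     (forall e : C, 0 < e -> exists N : nat, forall m n : nat,
         (N <= m)%N -> (N <= n)%N -> nA (u m - u n) < e) ->
     exists x : A, forall e : C, 0 < e -> exists N : nat,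
         forall n : nat, (N <= n)%N -> nA (u n - x) < e).

(* positive elements of M_n(A): matrices of the form y^* y *)
Definition posM (n : nat) (a : 'I_n -> 'I_n -> A) : Prop :=
  exists y : 'I_n -> 'I_n -> A,
    forall i j, a i j = \sum_(k < n) star (y k i) * y k j.
End CStar.

(* inner product linear in the second, conjugate-linear in the first slot *)
Section Hilbert.
Variable H : lmodType C.
Variable ip : H -> H -> C.

Definition hilbert_space : Prop :=
  [/\ (forall (c : C) x y z, ip x (c *: y + z) = c * ip x y + ip x z),
      (forall x y, ip y x = (ip x y)^*),
      (forall x, 0 <= ip x x),
      (forall x, ip x x = 0 -> x = 0) &
      (forall u : nat -> H,
         (forall e : C, 0 < e -> exists N : nat, forall m n : nat,
             (N <= m)%N -> (N <= n)%N -> ip (u m - u n) (u m - u n) < e) ->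
         exists x : H, forall e : C, 0 < e -> exists N : nat,
             forall n : nat, (N <= n)%N -> ip (u n - x) (u n - x) < e)].

Definition bounded_op (T : H -> H) : Prop :=
  (forall (c : C) x y, T (c *: x + y) = c *: T x + T y) /\
  exists M : C, 0 <= M /\ forall x, ip (T x) (T x) <= M * ip x x.

Definition is_adjoint (T S : H -> H) : Prop :=
  forall h k, ip (T h) k = ip h (S k).

Definition invertible_op (T : H -> H) : Prop :=
  bounded_op T /\ exists S, bounded_op S /\ cancel T S /\ cancel S T.

Definition unitary_op (U : H -> H) : Prop :=
  bounded_op U /\
  exists V, [/\ bounded_op V, is_adjoint U V, cancel U V & cancel V U].
End Hilbert.

Section Instruments.
Variable A : algType C.
Variable star : A -> A.
Variable H : lmodType C.
Variable ip : H -> H -> C.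

Definition CP_map (phi : A -> H -> H) : Prop :=
  [/\ (forall (c : C) a b h, phi (c *: a + b) h = c *: phi a h + phi b h),
      (forall a, bounded_op ip (phi a)) &
      (forall (n : nat) (a : 'I_n -> 'I_n -> A), posM star a ->
         forall h : 'I_n -> H,
           0 <= \sum_(i < n) \sum_(j < n) ip (h i) (phi (a i j) (h j)))].

Definition star_hom (phi : A -> H -> H) : Prop :=
  [/\ (forall (c : C) a b h, phi (c *: a + b) h = c *: phi a h + phi b h),
      (forall a, bounded_op ip (phi a)),
      (forall a b h, phi (a * b) h = phi a (phi b h)) &
      (forall a, is_adjoint ip (phi a) (phi (star a)))].

Variables (d : measure_display) (X : measurableType d).

Definition countably_additive (mu : set X -> C) : Prop :=
  forall F : nat -> set X, (forall n, measurable (F n)) ->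
    trivIset setT F -> series_to (fun n => mu (F n)) (mu (\bigcup_n F n)).

(* CP instrument; only its values on measurable sets O(X) matter *)
Definition CP_instrument (I : set X -> A -> H -> H) : Prop :=
  (forall E, measurable E -> CP_map (I E)) /\
  (forall a h k, countably_additive (fun E => ip h (I E a k))).

(* UCP instrument, i.e. element of I_H(X, A) *)
Definition UCP_instrument (I : set X -> A -> H -> H) : Prop :=
  CP_instrument I /\ forall h, I setT 1 h = h.

Definition spectral_instrument (I : set X -> A -> H -> H) : Prop :=
  UCP_instrument I /\ forall E, measurable E -> star_hom (I E).

Definition Cstar_extreme (I : set X -> A -> H -> H) : Prop :=
  forall (n : nat) (T : 'I_n -> H -> H) (J : 'I_n -> set X -> A -> H -> H),
    (forall i, invertible_op ip (T i)) ->
    (forall i, UCP_instrument (J i)) ->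
    (* sum_i T_i^* T_i = I *)
    (forall h k, \sum_(i < n) ip (T i h) (T i k) = ip h k) ->
    (* I(.) = sum_i T_i^* J_i(.) T_i *)
    (forall E, measurable E -> forall a h k,
       ip h (I E a k) = \sum_(i < n) ip (T i h) (J i E a (T i k))) ->
    exists U : 'I_n -> H -> H, forall i, unitary_op ip (U i) /\
      (* J_i(.) = U_i^* I(.) U_i *)
      (forall E, measurable E -> forall a h k,
         ip h (J i E a k) = ip (U i h) (I E a (U i k))).
End Instruments.
End Defs.

(* Main.v *)
Require Import Defs.
From HB Require Import structures.
From mathcomp Require Import all_boot all_order all_algebra.
From mathcomp Require Import complex.
From mathcomp Require Import classical_sets reals measure.
From mathcomp Require Import boolp.
From mathcomp Require Import ring lra.
From Stdlib Require Import ClassicalEpsilon Classical.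
Set Implicit Arguments.
Unset Strict Implicit.
Unset Printing Implicit Defensive.
Import Order.TTheory GRing.Theory Num.Theory.

Module Part1.
Local Open Scope ring_scope.

Section Cplx.
Variable R : realType.
Local Notation C := R[i].
Local Notation Re := (@complex.Re R).
Local Notation Im := (@complex.Im R).

Lemma RcI (a b : R) : a%:C%C = b%:C%C -> a = b.
Proof. move=> h. have := congr1 (@complex.Re _) h. simpl. move=> ->. done. Qed.
Lemma cReJ (z : C) : Re (z^*) = Re z.
Proof. apply: RcI. by rewrite !complexRe Re_conj. Qed.
Lemma cReD (z w : C) : Re (z + w) = Re z + Re w.
Proof. by case: z => a b; case: w => c d. Qed.
Lemma cImD (z w : C) : Im (z + w) = Im z + Im w.
Proof. by case: z => a b; case: w => c d. Qed.
Lemma cReN (z : C) : Re (- z) = - Re z.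
Proof. by case: z. Qed.
Lemma cImN (z : C) : Im (- z) = - Im z.
Proof. by case: z. Qed.
Lemma cReB (z w : C) : Re (z - w) = Re z - Re w.
Proof. by rewrite cReD cReN. Qed.
Lemma cImB (z w : C) : Im (z - w) = Im z - Im w.
Proof. by rewrite cImD cImN. Qed.
Lemma cReM (z w : C) : Re (z * w) = Re z * Re w - Im z * Im w.
Proof. by case: z => a b; case: w. Qed.
Lemma cImM (z w : C) : Im (z * w) = Re z * Im w + Im z * Re w.
Proof. by case: z => a b; case: w => c d /=. Qed.
Lemma cReR (r : R) : Re (r%:C%C) = r. Proof. by []. Qed.
Lemma cImR (r : R) : Im (r%:C%C) = 0. Proof. by []. Qed.
Lemma cRe0 : Re 0 = 0. Proof. by []. Qed.
Lemma cIm0 : Im 0 = 0. Proof. by []. Qed.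
Lemma cRe1 : Re 1 = 1. Proof. by []. Qed.
Lemma cIm1 : Im 1 = 0. Proof. by []. Qed.
Lemma cRei : Re 'i = 0. Proof. by []. Qed.
Lemma cImi : Im 'i = 1. Proof. by []. Qed.
Lemma cplx_ext (z w : C) : Re z = Re w -> Im z = Im w -> z = w.
Proof. by case: z => a b; case: w => c d /= -> ->. Qed.
Lemma ge0_R (z : C) : 0 <= z -> z = (Re z)%:C%C.
Proof. move=> h; apply: cplx_ext => //=. by move: h; rewrite lecE /= => /andP[/eqP <- _]. Qed.
Lemma ge0_Re (z : C) : 0 <= z -> 0 <= Re z.
Proof. by rewrite lecE => /andP[_]. Qed.
Lemma lecRR (a b : R) : (a%:C%C <= b%:C%C) = (a <= b).
Proof. by rewrite lecE /= eqxx. Qed.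
Lemma ltcRR (a b : R) : (a%:C%C < b%:C%C) = (a < b).
Proof. by rewrite ltcE /= eqxx. Qed.
Lemma conjR (r : R) : (r%:C%C)^* = r%:C%C.
Proof. by apply: cplx_ext; rewrite ?cReJ ?cImJ /= ?oppr0. Qed.
Lemma RcD (a b : R) : (a + b)%:C%C = a%:C%C + b%:C%C :> C.
Proof. by apply: cplx_ext; rewrite ?cReD ?cImD //= addr0. Qed.
Lemma RcM (a b : R) : (a * b)%:C%C = a%:C%C * b%:C%C :> C.
Proof. by apply: cplx_ext; rewrite ?cReM ?cImM //= ?mul0r ?mulr0 ?subr0 ?addr0. Qed.
Lemma RcN (a : R) : (- a)%:C%C = - a%:C%C :> C.
Proof. by apply: cplx_ext; rewrite ?cReN ?cImN //= oppr0. Qed.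
Lemma cImJ (z : C) : Im (z^*) = - Im z.
Proof. apply: RcI. by rewrite RcN !complexIm Im_conj. Qed.
Lemma RcB (a b : R) : (a - b)%:C%C = a%:C%C - b%:C%C :> C.
Proof. by rewrite RcD RcN. Qed.
Lemma Rc0 : (0 : R)%:C%C = 0 :> C. Proof. by []. Qed.
Lemma Rc1 : (1 : R)%:C%C = 1 :> C. Proof. by []. Qed.
Definition sq (z : C) : R := Re z ^+ 2 + Im z ^+ 2.
Lemma sq_ge0 z : 0 <= sq z.
Proof. rewrite /sq; apply: addr_ge0; exact: sqr_ge0. Qed.
Lemma mulJ (z : C) : z * z^* = (sq z)%:C%C.
Proof. apply: cplx_ext; rewrite ?cReM ?cImM cReJ cImJ /sq /=; ring. Qed.
Lemma mulJ' (z : C) : z^* * z = (sq z)%:C%C.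
Proof. by rewrite mulrC mulJ. Qed.
Lemma sq_eq0 z : sq z = 0 -> z = 0.
Proof. rewrite /sq => h. have h1 : Re z = 0 by nra. have h2 : Im z = 0 by nra.
by apply: cplx_ext. Qed.
Lemma sqM z w : sq (z * w) = sq z * sq w.
Proof. rewrite /sq cReM cImM; ring. Qed.
Lemma sqJ z : sq (z^*) = sq z.
Proof. by rewrite /sq cReJ cImJ sqrrN. Qed.
End Cplx.

End Part1.
Import Part1.

Module Part2.
Local Open Scope ring_scope.

Section Hil.
Variable R : realType.
Local Notation C := R[i].
Local Notation Re := (@complex.Re R).
Local Notation Im := (@complex.Im R).
Variables (H : lmodType C) (ip : H -> H -> C).
Hypothesis hH : hilbert_space ip.

Lemma ipDZr c x y z : ip x (c *: y + z) = c * ip x y + ip x z.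
Proof. by case: hH. Qed.
Lemma ipC x y : ip y x = (ip x y)^*.
Proof. by case: hH. Qed.
Lemma ip_ge0 x : 0 <= ip x x.
Proof. by case: hH. Qed.
Lemma ip_eq0 x : ip x x = 0 -> x = 0.
Proof. by case: hH => _ _ _ h _; apply: h. Qed.

Lemma ip0r x : ip x 0 = 0.
Proof.
have h := ipDZr 1 x 0 0; rewrite scaler0 addr0 mul1r in h.
have : ip x 0 + ip x 0 - ip x 0 = ip x 0 - ip x 0 by rewrite -h.
by rewrite addrK subrr.
Qed.
Lemma ipDr x y z : ip x (y + z) = ip x y + ip x z.
Proof. by have := ipDZr 1 x y z; rewrite scale1r mul1r. Qed.
Lemma ipZr c x y : ip x (c *: y) = c * ip x y.
Proof. by have := ipDZr c x y 0; rewrite !addr0 ip0r addr0. Qed.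
Lemma ipNr x y : ip x (- y) = - ip x y.
Proof. by rewrite -scaleN1r ipZr mulN1r. Qed.
Lemma ipBr x y z : ip x (y - z) = ip x y - ip x z.
Proof. by rewrite ipDr ipNr. Qed.
Lemma ip_sumr x (I : Type) (r : seq I) (P : pred I) (F : I -> H) :
  ip x (\sum_(i <- r | P i) F i) = \sum_(i <- r | P i) ip x (F i).
Proof.
elim/big_rec2: _ => [|i a b _ <-]; first by rewrite ip0r.
by rewrite ipDr.
Qed.
Lemma ipDl x y z : ip (y + z) x = ip y x + ip z x.
Proof. by rewrite ipC ipDr rmorphD /= -!ipC. Qed.
Lemma ipZl c x y : ip (c *: y) x = c^* * ip y x.
Proof. by rewrite ipC ipZr rmorphM /= -ipC. Qed.
Lemma ip0l x : ip 0 x = 0.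
Proof. by rewrite ipC ip0r rmorph0. Qed.
Lemma ipNl x y : ip (- y) x = - ip y x.
Proof. by rewrite ipC ipNr rmorphN /= -ipC. Qed.
Lemma ipBl x y z : ip (y - z) x = ip y x - ip z x.
Proof. by rewrite ipDl ipNl. Qed.
Lemma ip_suml x (I : Type) (r : seq I) (P : pred I) (F : I -> H) :
  ip (\sum_(i <- r | P i) F i) x = \sum_(i <- r | P i) ip (F i) x.
Proof.
elim/big_rec2: _ => [|i a b _ <-]; first by rewrite ip0l.
by rewrite ipDl.
Qed.

Definition N2 x : R := Re (ip x x).
Lemma ipN2 x : ip x x = (N2 x)%:C%C.
Proof. exact/ge0_R/ip_ge0. Qed.
Lemma N2_ge0 x : 0 <= N2 x.
Proof. exact/ge0_Re/ip_ge0. Qed.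
Lemma N2_eq0 x : N2 x = 0 -> x = 0.
Proof. by move=> h; apply: ip_eq0; rewrite ipN2 h. Qed.
Lemma ReipC x y : Re (ip y x) = Re (ip x y).
Proof. by rewrite ipC cReJ. Qed.
Lemma ImipC x y : Im (ip y x) = - Im (ip x y).
Proof. by rewrite ipC cImJ. Qed.
Lemma N2D x y : N2 (x + y) = N2 x + N2 y + 2 * Re (ip x y).
Proof. rewrite /N2 ipDl !ipDr !cReD (ReipC x y); ring. Qed.
Lemma N2N x : N2 (- x) = N2 x.
Proof. by rewrite /N2 ipNl ipNr opprK. Qed.
Lemma N2B x y : N2 (x - y) = N2 x + N2 y - 2 * Re (ip x y).
Proof. rewrite N2D N2N ipNr cReN; ring. Qed.
Lemma N2Z c x : N2 (c *: x) = sq c * N2 x.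
Proof. by rewrite /N2 ipZl ipZr mulrA mulJ' ipN2 -RcM. Qed.
Lemma N2_0 : N2 0 = 0.
Proof. by rewrite /N2 ip0r. Qed.
Lemma N2_par x y : N2 (x + y) <= 2 * N2 x + 2 * N2 y.
Proof. have := N2_ge0 (x - y). rewrite N2B N2D. lra. Qed.

Lemma CS_re x y : Re (ip x y) ^+ 2 <= N2 x * N2 y.
Proof.
have [y0|ny] := eqVneq (N2 y) 0.
  by rewrite (N2_eq0 y0) ip0r N2_0 mulr0 expr0n.
have yp : 0 < N2 y by rewrite lt_def ny N2_ge0.
set a := Re (ip x y).
have := N2_ge0 (x - (a / N2 y)%:C%C *: y).
rewrite N2B N2Z ipZr cReM /= mul0r subr0 /sq /= expr0n addr0 /= => h.
have h2 : 0 <= N2 x + (a / N2 y) ^+ 2 * N2 y - 2 * (a / N2 y * a) by [].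
have e1 : (a / N2 y) ^+ 2 * N2 y = a ^+ 2 / N2 y by field; rewrite ny.
have e2 : (a / N2 y * a) = a ^+ 2 / N2 y by field; rewrite ny.
rewrite e1 e2 in h2.
have h3 : 0 <= N2 x - a ^+ 2 / N2 y by lra.
have h4 : 0 <= (N2 x - a ^+ 2 / N2 y) * N2 y by apply: mulr_ge0 => //; lra.
have e3 : (N2 x - a ^+ 2 / N2 y) * N2 y = N2 x * N2 y - a ^+ 2 by field; rewrite ny.
rewrite e3 in h4; lra.
Qed.

Lemma CS x y : sq (ip x y) <= N2 x * N2 y.
Proof.
have := CS_re x ((ip x y)^* *: y).
rewrite ipZr mulrC mulJ cReR N2Z sqJ => h.
have [z|nz] := eqVneq (sq (ip x y)) 0; first by rewrite z; apply: mulr_ge0; apply: N2_ge0.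
have zp : 0 < sq (ip x y) by rewrite lt_def nz sq_ge0.
have e : N2 x * (sq (ip x y) * N2 y) = sq (ip x y) * (N2 x * N2 y) by ring.
by rewrite -(ler_pM2l zp) -e -expr2.
Qed.

Definition nm x : R := Num.sqrt (N2 x).
Lemma nm_ge0 x : 0 <= nm x. Proof. exact: sqrtr_ge0. Qed.
Lemma nm2 x : nm x ^+ 2 = N2 x. Proof. by rewrite sqr_sqrtr // N2_ge0. Qed.
Lemma Re_le_nm x y : Re (ip x y) <= nm x * nm y.
Proof.
have h := CS_re x y. rewrite -!nm2 -exprMn in h.
have := nm_ge0 x; have := nm_ge0 y => h1 h2.
have hp : 0 <= nm x * nm y by apply: mulr_ge0.
case: (lerP (Re (ip x y)) 0) => hr; first by lra.
by rewrite -(ler_pXn2r (n:=2)) // ?nnegrE ?ltW.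
Qed.
Lemma nmD x y : nm (x + y) <= nm x + nm y.
Proof.
have := nm_ge0 x; have := nm_ge0 y => h1 h2.
rewrite -(ler_pXn2r (n:=2)) ?nnegrE ?nm_ge0 ?addr_ge0 // nm2 N2D -!nm2.
have := Re_le_nm x y. nra.
Qed.
Lemma nmN x : nm (- x) = nm x. Proof. by rewrite /nm N2N. Qed.
Lemma nmB x y : nm (x - y) <= nm x + nm y.
Proof. by rewrite -(nmN y) nmD. Qed.
Lemma nm_sum (I : Type) (r : seq I) (F : I -> H) :
  nm (\sum_(i <- r) F i) <= \sum_(i <- r) nm (F i).
Proof.
elim: r => [|a r IH]; first by rewrite !big_nil /nm N2_0 sqrtr0.
rewrite !big_cons; apply: le_trans (nmD _ _) _; exact: lerD.
Qed.
Lemma nm_lt x e : 0 < e -> N2 x < e ^+ 2 -> nm x < e.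
Proof.
move=> ep h; rewrite -(ltr_pXn2r (n:=2)) ?nnegrE ?nm_ge0 ?ltW // nm2 //.
Qed.
Lemma N2_lt x e : 0 <= e -> nm x < e -> N2 x < e ^+ 2.
Proof.
move=> ep h; rewrite -nm2 (ltr_pXn2r (n:=2)) ?nnegrE ?nm_ge0 //.
Qed.
End Hil.

End Part2.
Import Part2.

Module Part3.
Local Open Scope ring_scope.

Section Lim.
Variable R : realType.
Local Notation C := R[i].
Local Notation Re := (@complex.Re R).
Local Notation Im := (@complex.Im R).
Variables (H : lmodType C) (ip : H -> H -> C).
Hypothesis hH : hilbert_space ip.
Local Notation N2 := (N2 ip).
Local Notation nm := (nm ip).

Definition linop (T : H -> H) := forall (c : C) x y, T (c *: x + y) = c *: T x + T y.
Definition bnd (T : H -> H) (M : R) := forall x, N2 (T x) <= M * N2 x.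

Section LinOp.
Variable T : H -> H.
Hypothesis hT : linop T.
Lemma lin0 : T 0 = 0.
Proof.
have h := hT 1 0 0; rewrite scaler0 addr0 scale1r in h.
have : T 0 + T 0 - T 0 = T 0 - T 0 by rewrite -h.
by rewrite addrK subrr.
Qed.
Lemma linD x y : T (x + y) = T x + T y.
Proof. by have := hT 1 x y; rewrite !scale1r. Qed.
Lemma linZ c x : T (c *: x) = c *: T x.
Proof. by have := hT c x 0; rewrite !addr0 lin0 addr0. Qed.
Lemma linN x : T (- x) = - T x.
Proof. by rewrite -scaleN1r linZ scaleN1r. Qed.
Lemma linB x y : T (x - y) = T x - T y.
Proof. by rewrite linD linN. Qed.
Lemma lin_sum (I : Type) (r : seq I) (F : I -> H) :
  T (\sum_(i <- r) F i) = \sum_(i <- r) T (F i).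
Proof.
elim: r => [|a r IH]; first by rewrite !big_nil lin0.
by rewrite !big_cons linD IH.
Qed.
End LinOp.

Lemma bounded_opP T : bounded_op ip T -> linop T /\ exists M : R, 0 <= M /\ bnd T M.
Proof.
case=> hl [M [M0 hM]]; split => //; exists (Re M); split; first exact: ge0_Re.
move=> x; have := hM x; rewrite !ipN2 // (ge0_R M0) -RcM lecRR //.
Qed.

Lemma bounded_opI T M : linop T -> 0 <= M -> bnd T M -> bounded_op ip T.
Proof.
move=> hl M0 hM; split => //; exists M%:C%C; split; first by rewrite lecRR.
by move=> x; rewrite !ipN2 // -RcM lecRR.
Qed.

Lemma linop_comp S T : linop S -> linop T -> linop (S \o T).
Proof. by move=> hS hT c x y /=; rewrite hT hS. Qed.
Lemma bnd_comp S T M1 M2 : 0 <= M1 -> bnd S M1 -> bnd T M2 -> bnd (S \o T) (M1 * M2).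
Proof.
move=> h0 h1 h2 x /=; apply: le_trans (h1 _) _; rewrite -mulrA; exact: ler_wpM2l.
Qed.
Lemma linop_id : linop id. Proof. by []. Qed.

Definition cvg (u : nat -> H) (x : H) :=
  forall e : R, 0 < e -> exists N, forall n, (N <= n)%N -> N2 (u n - x) < e.
Definition cauchy (u : nat -> H) :=
  forall e : R, 0 < e -> exists N, forall m n, (N <= m)%N -> (N <= n)%N -> N2 (u m - u n) < e.

Lemma complete u : cauchy u -> exists x, cvg u x.
Proof.
move=> hu; case: hH => _ _ _ _ hc.
have [|x hx] := hc u.
  move=> e ep; have ep' : 0 < Re e by move: ep; rewrite ltcE => /andP[_ ->].
  have [N hN] := hu _ ep'.
  exists N => m n hm hn; rewrite ipN2 // (ge0_R (ltW ep)) ltcRR; exact: hN.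
exists x => e ep; have ep' : 0 < e%:C%C by rewrite ltcRR.
have [N hN] := hx _ ep'.
by exists N => n hn; move: (hN n hn); rewrite ipN2 // ltcRR.
Qed.

Lemma small_eq0 (a : R) : 0 <= a -> (forall e, 0 < e -> a < e) -> a = 0.
Proof.
move=> a0 h; apply/eqP; rewrite eq_le a0 andbT; apply/negP => /negP.
rewrite -ltNge => ap; have := h _ ap; by rewrite ltxx.
Qed.

Lemma cvg_unique u x y : cvg u x -> cvg u y -> x = y.
Proof.
move=> hx hy; apply/eqP; rewrite -subr_eq0; apply/eqP; apply: (N2_eq0 hH).
apply: small_eq0; first exact: (N2_ge0 hH).
move=> e ep; have e4 : 0 < e / 4 by lra.
have [N1 h1] := hx _ e4; have [N2' h2] := hy _ e4.
have := h1 (maxn N1 N2') (leq_maxl _ _); have := h2 (maxn N1 N2') (leq_maxr _ _).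
set v := u _ => a b.
have e1 : y - x = (v - x) + (- (v - y)) by rewrite opprB [RHS]addrC [RHS]addrA subrK.
rewrite -(N2N hH) opprB e1; apply: le_lt_trans (N2_par hH _ _) _; rewrite (N2N hH); lra.
Qed.

Lemma cvg_lin T M u x : linop T -> bnd T M -> 0 <= M -> cvg u x -> cvg (T \o u) (T x).
Proof.
move=> hl hb M0 hu e ep.
have e' : 0 < e / (M + 1) by apply: divr_gt0 => //; lra.
have [N hN] := hu _ e'.
exists N => n hn /=; rewrite -linB //; apply: le_lt_trans (hb _) _.
have := hN n hn => h.
have h2 : M * N2 (u n - x) <= (M + 1) * N2 (u n - x).
  by apply: ler_wpM2r; [apply: N2_ge0 | lra].
apply: le_lt_trans h2 _; rewrite mulrC -ltr_pdivlMr //; lra.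
Qed.

Lemma cvgD u v x y : cvg u x -> cvg v y -> cvg (fun n => u n + v n) (x + y).
Proof.
move=> hu hv e ep; have e4 : 0 < e / 4 by lra.
have [N1 h1] := hu _ e4; have [N2' h2] := hv _ e4.
exists (maxn N1 N2') => n hn.
have := h1 n (leq_trans (leq_maxl _ _) hn); have := h2 n (leq_trans (leq_maxr _ _) hn) => a b.
have -> : u n + v n - (x + y) = (u n - x) + (v n - y).
  by rewrite opprD addrACA.
apply: le_lt_trans (N2_par hH _ _) _; lra.
Qed.

Lemma cvg_const x : cvg (fun _ => x) x.
Proof. by move=> e ep; exists 0%N => n _; rewrite subrr (N2_0 hH). Qed.

Lemma cvg_shift u x : cvg u x -> cvg (fun n => u n.+1) x.
Proof. move=> hu e ep; have [N hN] := hu e ep; exists N => n hn; apply: hN; exact: leqW. Qed.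

Lemma cvg_shift' u x : cvg (fun n => u n.+1) x -> cvg u x.
Proof. move=> hu e ep; have [N hN] := hu e ep; exists N.+1 => n hn.
by case: n hn => // n hn; apply: hN. Qed.

Lemma cvg_eq u v x : (forall n, u n = v n) -> cvg u x -> cvg v x.
Proof. move=> h hu e ep; have [N hN] := hu e ep; exists N => n hn; rewrite -h; exact: hN. Qed.

Definition ccvg (a : nat -> C) (l : C) :=
  forall e : R, 0 < e -> exists N, forall n, (N <= n)%N -> sq (a n - l) < e.
Lemma sq_par (z w : C) : sq (z + w) <= 2 * sq z + 2 * sq w.
Proof.
rewrite /sq cReD cImD.
set a := complex.Re z; set b := complex.Re w; set c := complex.Im z; set d := complex.Im w.
have e : 2 * (a ^+ 2 + c ^+ 2) + 2 * (b ^+ 2 + d ^+ 2) - ((a + b) ^+ 2 + (c + d) ^+ 2)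
  = (a - b) ^+ 2 + (c - d) ^+ 2 by ring.
have := sqr_ge0 (a - b); have := sqr_ge0 (c - d). lra.
Qed.
Lemma sqN (z : C) : sq (- z) = sq z.
Proof. by rewrite /sq cReN cImN !sqrrN. Qed.
Lemma ccvg_unique a l1 l2 : ccvg a l1 -> ccvg a l2 -> l1 = l2.
Proof.
move=> hx hy; apply/eqP; rewrite -subr_eq0; apply/eqP; apply: sq_eq0.
apply: small_eq0; first exact: sq_ge0.
move=> e ep; have e4 : 0 < e / 4 by lra.
have [N1 h1] := hx _ e4; have [N2' h2] := hy _ e4.
have := h1 (maxn N1 N2') (leq_maxl _ _); have := h2 (maxn N1 N2') (leq_maxr _ _).
set v := a _ => p q.
have e1 : l1 - l2 = (v - l2) + (- (v - l1)) by rewrite opprB [RHS]addrC [RHS]addrA subrK.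
rewrite e1; apply: le_lt_trans (sq_par _ _) _; rewrite sqN; lra.
Qed.
Lemma ccvg_eq a b l : (forall n, a n = b n) -> ccvg a l -> ccvg b l.
Proof. move=> h hu e ep; have [N hN] := hu e ep; exists N => n hn; rewrite -h; exact: hN. Qed.

Lemma ccvg_ipr h u x : cvg u x -> ccvg (fun n => ip h (u n)) (ip h x).
Proof.
move=> hu e ep; have e' : 0 < e / (N2 h + 1).
  by apply: divr_gt0 => //; have := N2_ge0 hH h; lra.
have [N hN] := hu _ e'.
exists N => n hn; rewrite -(ipBr hH) //; apply: le_lt_trans (CS hH _ _) _.
have := hN n hn => p; have := N2_ge0 hH h => q.
have q' : 0 < N2 h + 1 by lra.
rewrite ltr_pdivlMr // in p.
have := N2_ge0 hH (u n - x) => r. nra.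
Qed.
Lemma ccvg_ipl h u x : cvg u x -> ccvg (fun n => ip (u n) h) (ip x h).
Proof.
move=> hu e ep; have [N hN] := ccvg_ipr h hu ep; exists N => n hn.
rewrite (ipC hH h (u n)) (ipC hH h x) -rmorphB /= sqJ.
exact: hN.
Qed.

Lemma pow_small (r : R) : 0 <= r < 1 -> forall e, 0 < e -> exists N, r ^+ N < e.
Proof.
case/andP=> r0 r1 e ep.
have [->|rn0] := eqVneq r 0; first by exists 1%N; rewrite expr1.
have rp : 0 < r by rewrite lt_def rn0 r0.
set t := r^-1 - 1.
have tp : 0 < t by rewrite /t subr_gt0 invf_gt1.
have bern : forall n, 1 + n%:R * t <= (1 + t) ^+ n.
  elim=> [|n IH]; first by rewrite mul0r addr0 expr0.
  rewrite exprS -natr1 mulrDl mul1r.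
  have := IH; have : 0 <= n%:R * t by apply: mulr_ge0; [apply: ler0n | lra].
  move=> a b; nra.
have e1 : 1 + t = r^-1 by rewrite /t addrC subrK.
pose k := Num.bound (1 / (e * t)).
have hk : 1 / (e * t) < k%:R.
  rewrite /k; apply: archi_boundP; apply: divr_ge0 => //; apply: mulr_ge0; lra.
exists k.
have hb := bern k; rewrite e1 exprVn in hb.
have hrk : 0 < r ^+ k by apply: exprn_gt0.
have : 1 + k%:R * t <= (r ^+ k)^-1 by [].
rewrite -[X in _ <= X]mul1r ler_pdivlMr // => h2.
have et : 0 < e * t by apply: mulr_gt0.
have ket : 1 < k%:R * (e * t).
  have h3 : 1 / (e * t) * (e * t) < k%:R * (e * t) by rewrite ltr_pM2r.
  by rewrite mul1r mulVf ?gt_eqF // in h3.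
nra.
Qed.

Lemma geom_sum (r : R) n m : r != 1 -> \sum_(n <= k < n + m) r ^+ k = r ^+ n * (1 - r ^+ m) / (1 - r).
Proof.
move=> r1; have r1' : 1 - r != 0 by rewrite subr_eq0 eq_sym.
elim: m => [|m IH]; first by rewrite addn0 big_geq // expr0 subrr mulr0 mul0r.
rewrite addnS big_nat_recr /= ?leq_addr // IH exprD exprS; field; done.
Qed.

Lemma geom_cauchy u (K r : R) : 0 <= K -> 0 <= r < 1 ->
  (forall n, nm (u n.+1 - u n) <= K * r ^+ n) -> cauchy u.
Proof.
move=> K0 /andP[r0 r1] hu.
have key : forall n m, nm (u (n + m)%N - u n) <= K * r ^+ n / (1 - r).
  move=> n m; have -> : u (n + m)%N - u n = \sum_(n <= k < n + m) (u k.+1 - u k).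
    rewrite telescope_sumr ?leq_addr //.
  apply: le_trans (nm_sum hH _ _) _.
  apply: le_trans (ler_sum _ (fun k _ => hu k)) _.
  rewrite -mulr_sumr geom_sum ?lt_eqF // -!mulrA ler_wpM2l // mulrA ler_pM2r ?invr_gt0 ?subr_gt0 //.
  rewrite ler_piMr ?exprn_ge0 //; have := exprn_ge0 m r0; lra.
move=> e ep.
have sp : 0 < Num.sqrt e / 4 by apply: divr_gt0; rewrite ?sqrtr_gt0.
have rr : 0 <= r < 1 by rewrite r0 r1.
have e' : 0 < (Num.sqrt e / 4) * (1 - r) / (K + 1).
  apply: divr_gt0; [apply: mulr_gt0 => //; lra | lra].
have [N hN] := pow_small rr e'.
exists N => m n hm hn.
have bnd : forall p, (N <= p)%N -> nm (u p - u N) <= Num.sqrt e / 4.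
  move=> p hp; rewrite -(subnKC hp); apply: le_trans (key _ _) _.
  have h1 : K * r ^+ N <= (K + 1) * ((Num.sqrt e / 4) * (1 - r) / (K + 1)).
    apply: (@le_trans _ _ ((K + 1) * r ^+ N)).
      by apply: ler_wpM2r; [apply: exprn_ge0 | lra].
    by apply: ler_wpM2l; [lra | apply: ltW].
  have e2 : (K + 1) * ((Num.sqrt e / 4) * (1 - r) / (K + 1)) = (Num.sqrt e / 4) * (1 - r).
    by field; lra.
  rewrite e2 in h1; rewrite ler_pdivrMr ?subr_gt0 //.
have hs : nm (u m - u n) < Num.sqrt e.
  rewrite (_ : u m - u n = (u m - u N) - (u n - u N)); last by rewrite opprB [RHS]addrA subrK.
  apply: le_lt_trans (nmB hH _ _) _.
  have := bnd m hm; have := bnd n hn => a b. have := sp; lra.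
have := @N2_lt _ _ _ hH _ _ (sqrtr_ge0 e) hs. rewrite sqr_sqrtr //; exact: ltW.
Qed.
End Lim.

End Part3.
Import Part3.

Module Part4.
Local Open Scope ring_scope.

Section Riesz.
Variable R : realType.
Local Notation C := R[i].
Local Notation Re := (@complex.Re R).
Local Notation Im := (@complex.Im R).
Variables (H : lmodType C) (ip : H -> H -> C).
Hypothesis hH : hilbert_space ip.
Local Notation N2 := (N2 ip).
Local Notation nm := (nm ip).

Lemma ip_ext a b : (forall x, ip x a = ip x b) -> a = b.
Proof.
move=> h; apply/eqP; rewrite -subr_eq0; apply/eqP; apply: (ip_eq0 hH).
by rewrite (ipBr hH) h subrr.
Qed.

Lemma small_le (a b : R) : (forall e, 0 < e -> a < b + e) -> a <= b.
Proof.
move=> h; rewrite leNgt; apply/negP => ab.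
have := h (a - b) _; rewrite subr_gt0 => /(_ ab); lra.
Qed.

Lemma nat_small (e : R) : 0 < e -> exists N : nat, 1 / (N%:R + 1) < e.
Proof.
move=> ep; pose k := Num.bound (1 / e).
have hk : 1 / e < k%:R by apply: archi_boundP; apply: divr_ge0 => //; apply: ltW.
exists k; have kp : 0 < k%:R + 1 :> R by have := ler0n R k; lra.
rewrite ltr_pdivrMr // in hk; rewrite ltr_pdivrMr //; lra.
Qed.

Lemma nat_small_le (e : R) N n : 1 / (N%:R + 1) < e -> (N <= n)%N -> 1 / (n%:R + 1) < e.
Proof.
move=> h hn.
have kp : 0 < N%:R + 1 :> R by have := ler0n R N; lra.
have np : 0 < n%:R + 1 :> R by have := ler0n R n; lra.
have hNn : (N%:R : R) <= n%:R by rewrite ler_nat.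
have ep : 0 < e by apply: lt_trans h; apply: divr_gt0.
rewrite ltr_pdivrMr // in h; rewrite ltr_pdivrMr //; nra.
Qed.

Variable g : H -> C.
Hypothesis glin : forall (c : C) x y, g (c *: x + y) = c * g x + g y.
Variable M : R.
Hypothesis gb : forall x, sq (g x) <= M * N2 x.

Lemma g0 : g 0 = 0.
Proof.
have h := glin 1 0 0; rewrite scaler0 addr0 mul1r in h.
have : g 0 + g 0 - g 0 = g 0 - g 0 by rewrite -h.
by rewrite addrK subrr.
Qed.
Lemma gD x y : g (x + y) = g x + g y.
Proof. by have := glin 1 x y; rewrite scale1r mul1r. Qed.
Lemma gZ c x : g (c *: x) = c * g x.
Proof. by have := glin c x 0; rewrite !addr0 g0 addr0. Qed.
Lemma gB x y : g (x - y) = g x - g y.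
Proof. by rewrite -scaleN1r addrC glin mulN1r addrC. Qed.

Lemma riesz : exists z, forall x, g x = ip z x.
Proof.
have [g00|[x0 gx0]] : (forall x, g x = 0) \/ exists x, g x != 0.
  case: (classic (exists x, g x != 0)) => [h|h]; [by right|left] => x.
  by apply/eqP/negPn/negP => hx; apply: h; exists x.
  by exists 0 => x; rewrite g00 (ip0l hH).
pose x1 := (g x0)^-1 *: x0.
have gx1 : g x1 = 1 by rewrite gZ mulVf.
pose E : set R := fun r => exists x, g x = 1 /\ r = N2 x.
have hE : has_inf E.
  split; first by exists (N2 x1); exists x1.
  by exists 0 => r [x [_ ->]]; apply: (N2_ge0 hH).
set d := inf E.
have dlb : forall x, g x = 1 -> d <= N2 x.
  by move=> x hx; apply: (ge_inf hE.2); exists x.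
have d0 : 0 <= d.
  by apply: lb_le_inf; [exists (N2 x1); exists x1 | move=> r [x [_ ->]]; apply: (N2_ge0 hH)].
have seqE : forall n : nat, exists x, g x = 1 /\ N2 x < d + 1 / (n%:R + 1).
  move=> n; have np : 0 < 1 / (n%:R + 1) :> R.
    by apply: divr_gt0 => //; have := ler0n R n; lra.
  have [r [x [hx ->]] hr] := inf_adherent np hE.
  by exists x.
pose xs := fun n => proj1_sig (constructive_indefinite_description _ (seqE n)).
have hxs : forall n, g (xs n) = 1 /\ N2 (xs n) < d + 1 / (n%:R + 1).
  by move=> n; rewrite /xs; case: constructive_indefinite_description.
have cau : cauchy ip xs.
  move=> e ep; have e4 : 0 < e / 4 by lra.
  have [N hN] := nat_small e4.
  exists N => m n hm hn.
  have [g1 b1] := hxs m; have [g2 b2] := hxs n.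
  have s1 := nat_small_le hN hm; have s2 := nat_small_le hN hn.
  pose c : C := (2^-1 : R)%:C%C.
  have hmid : g (c *: (xs m + xs n)) = 1.
    rewrite gZ gD g1 g2 /c -Rc1 -RcD -RcM; congr (_%:C%C).
    by field.
  have := dlb _ hmid; rewrite (N2Z hH) /sq /c cReR cImR.
  move=> hd.
  have par := N2B hH (xs m) (xs n); have par2 := N2D hH (xs m) (xs n).
  lra.
have [w hw] := complete hH cau.
have gw : g w = 1.
  have c1 : ccvg (fun n => g (xs n)) (g w).
    move=> e ep; have Mp : 0 < `|M| + 1 by have := normr_ge0 M; lra.
    have e' : 0 < e / (`|M| + 1) by apply: divr_gt0.
    have [N hN] := hw _ e'; exists N => n hn.
    rewrite -gB; apply: le_lt_trans (gb _) _.
    have := hN n hn; rewrite ltr_pdivlMr // => h.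
    have := N2_ge0 hH (xs n - w); have := ler_norm M => p q.
    have : M * N2 (xs n - w) <= (`|M| + 1) * N2 (xs n - w) by apply: ler_wpM2r => //; lra.
    move=> r; rewrite mulrC in h; lra.
  have c2 : ccvg (fun n => g (xs n)) 1.
    by move=> e ep; exists 0%N => n _; rewrite (hxs n).1 subrr /sq /=; lra.
  exact: ccvg_unique c1 c2.
have Nw : N2 w <= d.
  apply: small_le => e ep.
  have e4 : 0 < e / 4 by lra.
  have d1 : 0 < d + 1 by lra.
  have e5 : 0 < (e / 4) ^+ 2 / (d + 1) by apply: divr_gt0 => //; apply: exprn_gt0.
  have [N1 h1] := hw _ e4; have [N2' h2] := hw _ e5; have [N3 h3] := nat_small e4.
  pose k := maxn N1 (maxn N2' N3).
  have k1 : (N1 <= k)%N by rewrite leq_maxl.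
  have k2 : (N2' <= k)%N by rewrite /k (leq_trans (leq_maxl N2' N3)) ?leq_maxr.
  have k3 : (N3 <= k)%N by rewrite /k (leq_trans (leq_maxr N2' N3)) ?leq_maxr.
  have a1 := h1 _ k1; have a2 := h2 _ k2; have a3 := nat_small_le h3 k3.
  have [_ b] := hxs k.
  have kp : 0 < 1 / (k%:R + 1) :> R by apply: divr_gt0 => //; have := ler0n R k; lra.
  have k1' : 1 / (k%:R + 1) <= 1 :> R.
    by rewrite ler_pdivrMr ?mul1r; have := ler0n R k; lra.
  set v := w - xs k.
  have ev : w = xs k + v by rewrite /v addrC subrK.
  have v1 : N2 v < e / 4 by rewrite /v -(N2N hH) opprB.
  have v2 : N2 v * (d + 1) < (e / 4) ^+ 2.
    by rewrite -ltr_pdivlMr // /v -(N2N hH) opprB.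
  have cs := CS_re hH (xs k) v.
  have nv := N2_ge0 hH v; have nx := N2_ge0 hH (xs k).
  have r1 : complex.Re (ip (xs k) v) ^+ 2 < (e / 4) ^+ 2.
    apply: le_lt_trans cs _; apply: le_lt_trans v2.
    rewrite mulrC; apply: ler_wpM2l => //; lra.
  have r2 : complex.Re (ip (xs k) v) < e / 4.
    case: (lerP (e / 4) (complex.Re (ip (xs k) v))) => // hr.
    have : (e / 4) ^+ 2 <= complex.Re (ip (xs k) v) ^+ 2.
      by rewrite ler_pXn2r ?nnegrE //; lra.
    lra.
  rewrite ev (N2D hH); lra.
have orth : forall n0, g n0 = 0 -> ip w n0 = 0.
  move=> n0 gn0; set a := ip w n0.
  set s : R := 1 / (N2 n0 + 1).
  have n0p := N2_ge0 hH n0.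
  have sp : 0 < s by apply: divr_gt0 => //; lra.
  have sn : s * N2 n0 < 1.
    by rewrite /s mul1r mulrC ltr_pdivrMr; lra.
  pose t : C := - (s%:C%C * a^*).
  have gt : g (w + t *: n0) = 1 by rewrite gD gZ gn0 mulr0 addr0.
  have := dlb _ gt; rewrite (N2D hH) (N2Z hH) (ipZr hH).
  have -> : t * a = - (s * sq a)%:C%C by rewrite /t mulNr -mulrA mulJ' -RcM.
  rewrite cReN cReR /t sqN sqM sqJ /sq cReR cImR expr0n addr0 -/(sq a) => h.
  have sa := sq_ge0 a.
  have : sq a * s * (2 - s * N2 n0) <= 0 by nra.
  move=> h2; apply: sq_eq0; apply/eqP; rewrite eq_le sa andbT.
  have : 0 < s * (2 - s * N2 n0) by apply: mulr_gt0 => //; lra.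
  move=> h3; rewrite -mulrA in h2; rewrite -(pmulr_rle0 _ h3) mulrC //.
have w0 : N2 w != 0.
  apply/negP => /eqP /(N2_eq0 hH) w0; move: gw; rewrite w0 g0 => /eqP.
  by rewrite eq_sym oner_eq0.
exists ((N2 w)^-1%:C%C *: w) => x.
have := orth (x - g x *: w); rewrite gB gZ gw mulr1 subrr => /(_ erefl).
rewrite (ipBr hH) (ipZr hH) (ipN2 hH) => /eqP; rewrite subr_eq0 => /eqP hx.
by rewrite (ipZl hH) conjR hx mulrCA -RcM mulVf // Rc1 mulr1.
Qed.
End Riesz.

Section Adjoint.
Variable R : realType.
Local Notation C := R[i].
Variables (H : lmodType C) (ip : H -> H -> C).
Hypothesis hH : hilbert_space ip.
Local Notation N2 := (N2 ip).

Lemma adjoint T M : linop T -> 0 <= M -> bnd ip T M ->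
  exists T', [/\ linop T', bnd ip T' M & forall x y, ip (T x) y = ip x (T' y)].
Proof.
move=> hT M0 hb.
have h : forall y, exists z, forall x, ip (T x) y = ip x z.
  move=> y.
  have gl : forall (c : C) x x', ip y (T (c *: x + x')) = c * ip y (T x) + ip y (T x').
    by move=> c x x'; rewrite hT (ipDZr hH).
  have gbp : forall x, sq (ip y (T x)) <= (N2 y * M) * N2 x.
    move=> x; apply: le_trans (CS hH _ _) _; rewrite -mulrA; apply: ler_wpM2l.
      exact: N2_ge0.
    exact: hb.
  have [z hz] := @riesz _ _ _ hH (fun x => ip y (T x)) gl (N2 y * M) gbp.
  by exists z => x; rewrite (ipC hH) hz -(ipC hH).
pose T' := fun y => proj1_sig (constructive_indefinite_description _ (h y)).
have hT' : forall x y, ip (T x) y = ip x (T' y).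
  by move=> x y; rewrite /T'; case: constructive_indefinite_description.
exists T'; split => //.
- move=> c y y'; apply: (ip_ext hH) => x.
  by rewrite -hT' (ipDZr hH) (ipDZr hH) !hT'.
- move=> y; have := CS hH (T (T' y)) y; rewrite hT' (ipN2 hH) /sq cReR cImR expr0n addr0.
  have := hb (T' y); have := N2_ge0 hH (T' y); have := N2_ge0 hH y => a b c d.
  have : N2 (T' y) ^+ 2 <= M * N2 (T' y) * N2 y.
    apply: le_trans d _; apply: ler_wpM2r => //.
  move=> e.
  have [n0|np] := eqVneq (N2 (T' y)) 0; first by rewrite n0; apply: mulr_ge0.
  have np' : 0 < N2 (T' y) by rewrite lt_def np b.
  rewrite -(ler_pM2r np'); rewrite expr2 in e; lra.
Qed.
End Adjoint.

End Part4.
Import Part4.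

Module Part5.
Local Open Scope ring_scope.

Section CP.
Variable R : realType.
Local Notation C := R[i].
Local Notation Re := (@complex.Re R).
Local Notation Im := (@complex.Im R).
Variables (A : algType C) (star : A -> A) (nA : A -> C).
Hypothesis hA : unital_Cstar_algebra star nA.
Variables (H : lmodType C) (ip : H -> H -> C).
Hypothesis hH : hilbert_space ip.
Local Notation N2 := (N2 ip).

Lemma starK a : star (star a) = a. Proof. by case: hA => -[]. Qed.
Lemma starD a b : star (a + b) = star a + star b. Proof. by case: hA => -[]. Qed.
Lemma starM a b : star (a * b) = star b * star a. Proof. by case: hA => -[]. Qed.
Lemma star0 : star 0 = 0.
Proof.
have h := starD 0 0; rewrite addr0 in h.
have : star 0 + star 0 - star 0 = star 0 - star 0 by rewrite -h.
by rewrite addrK subrr.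
Qed.
Lemma star1 : star 1 = 1.
Proof.
have h := starM (star 1) 1; rewrite !mulr1 starK mulr1 in h.
by rewrite -h.
Qed.

Lemma cRe_sum (I : Type) (r : seq I) (F : I -> C) :
  Re (\sum_(i <- r) F i) = \sum_(i <- r) Re (F i).
Proof.
elim: r => [|a r IH]; first by rewrite !big_nil.
by rewrite !big_cons cReD IH.
Qed.

Section Phi.
Variable phi : A -> H -> H.
Hypothesis hphi : CP_map star ip phi.

Lemma phi_lin a : linop (phi a).
Proof. by case: hphi => _ h _; case: (h a). Qed.
Lemma phi_bnd a : exists M : R, 0 <= M /\ bnd ip (phi a) M.
Proof. by case: hphi => _ h _; case: (bounded_opP hH (h a)). Qed.

Lemma cp2 a0 h0 h1 :
  0 <= ip h0 (phi (star a0 * a0) h0) + ip h0 (phi (star a0) h1)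
       + ip h1 (phi a0 h0) + ip h1 (phi 1 h1).
Proof.
case: hphi => _ _ hp.
pose y0 : 'I_2 -> A := fun i => if i == ord0 then a0 else 1.
pose y : 'I_2 -> 'I_2 -> A := fun k i => if k == ord0 then y0 i else 0.
pose a : 'I_2 -> 'I_2 -> A := fun i j => star (y0 i) * y0 j.
have pa : posM star a.
  exists y => i j; rewrite big_ord_recl big_ord1 /y /= star0 mul0r addr0 //.
pose h : 'I_2 -> H := fun i => if i == ord0 then h0 else h1.
have := hp 2%N a pa h.
rewrite !big_ord_recl !big_ord0 /a /y0 /h /= star1 !mulr1 !mul1r !addr0.
by rewrite addrA.
Qed.
Lemma ge0_Im (z : C) : 0 <= z -> Im z = 0.
Proof. by rewrite lecE => /andP[/eqP -> _]. Qed.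

Lemma cp_diag1 a0 h0 : 0 <= ip h0 (phi (star a0 * a0) h0).
Proof.
have := cp2 a0 h0 0.
by rewrite (lin0 (phi_lin _)) (ip0r hH) !(ip0l hH) !addr0.
Qed.
Lemma cp_diag2 h1 : 0 <= ip h1 (phi 1 h1).
Proof.
have := cp2 0 0 h1.
by rewrite !(ip0l hH) (lin0 (phi_lin 0)) (ip0r hH) !add0r.
Qed.

Lemma herm a0 h0 h1 : ip h1 (phi a0 h0) = (ip h0 (phi (star a0) h1))^*.
Proof.
set u := ip h0 (phi (star a0) h1); set v := ip h1 (phi a0 h0).
set p := ip h0 (phi (star a0 * a0) h0); set w := ip h1 (phi 1 h1).
have key : forall c, Im (p + c * u + c^* * v + c * (c^* * w)) = 0.
  move=> c; apply: ge0_Im.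
  have := cp2 a0 h0 (c *: h1).
  by rewrite (linZ (phi_lin (star a0))) (linZ (phi_lin 1)) !(ipZr hH) !(ipZl hH).
have Ip : Im p = 0 by apply: ge0_Im; apply: cp_diag1.
have Iw : Im w = 0 by apply: ge0_Im; apply: cp_diag2.
have F : forall c, Im (p + c * u + c^* * v + c * (c^* * w)) =
    Im p + (Re c * Im u + Im c * Re u) + (Re c * Im v - Im c * Re v) + sq c * Im w.
  move=> c; rewrite !cImD (cImM c u) (cImM (c^*) v) cReJ cImJ mulrA mulJ (cImM (sq c)%:C%C w).
  rewrite cReR cImR /=; ring.
have k1 := key 1; have k2 := key 'i.
rewrite F cRe1 cIm1 Ip Iw in k1.
rewrite F cRei cImi Ip Iw in k2.
apply: cplx_ext; rewrite ?cReJ ?cImJ; lra.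
Qed.

Lemma herm_adj a x y : ip x (phi a y) = ip (phi (star a) x) y.
Proof. by rewrite herm (ipC hH y (phi (star a) x)). Qed.

Lemma kadison a h : (forall x, Re (ip x (phi 1 x)) <= N2 x) ->
  N2 (phi a h) <= Re (ip h (phi (star a * a) h)).
Proof.
move=> hle; set v := phi a h.
have := cp2 a h (- v).
rewrite (linN (phi_lin (star a))) (linN (phi_lin 1)) !(ipNr hH) !(ipNl hH) opprK.
rewrite (herm_adj (star a) h v) starK -/v => /ge0_Re.
rewrite !cReD !cReN -/(N2 v) => h1.
have := hle v; lra.
Qed.
End Phi.
End CP.

End Part5.
Import Part5.

Module Part6.
Local Open Scope ring_scope.
Local Open Scope classical_set_scope.

Section Meas.
Variable R : realType.
Local Notation C := R[i].
Variables (d : measure_display) (X : measurableType d).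
Variable mu : set X -> C.
Hypothesis hmu : countably_additive mu.

Lemma series_unique (u : nat -> C) l1 l2 : series_to u l1 -> series_to u l2 -> l1 = l2.
Proof.
move=> h1 h2; apply/eqP; rewrite -subr_eq0; apply/eqP.
have [//|hne] := eqVneq (l1 - l2) 0; exfalso.
have hp : 0 < `|l1 - l2| by rewrite normr_gt0.
have e2 : 0 < `|l1 - l2| / 2%:R by apply: divr_gt0.
have [N1 k1] := h1 _ e2; have [N2 k2] := h2 _ e2.
have := k1 (maxn N1 N2) (leq_maxl _ _); have := k2 (maxn N1 N2) (leq_maxr _ _).
set s := \sum_(i < _) _ => a b.
have : `|l1 - l2| <= `|s - l2| + `|s - l1|.
  have -> : l1 - l2 = (s - l2) - (s - l1) by rewrite opprB [RHS]addrC [RHS]addrA subrK.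
  by apply: le_trans (ler_normD _ _) _; rewrite normrN.
move=> c.
have : `|s - l2| + `|s - l1| < `|l1 - l2| / 2%:R + `|l1 - l2| / 2%:R by apply: ltrD.
have hh : `|l1 - l2| / 2%:R + `|l1 - l2| / 2%:R = `|l1 - l2| by field.
rewrite hh => c2.
by have := lt_le_trans c2 c; rewrite ltxx.
Qed.

Lemma mu0 : mu set0 = 0.
Proof.
have := hmu (F := fun _ => set0) (fun _ => measurable0) (@trivIset_set0 nat X setT).
rewrite bigcup0 // => hs.
have [//|hne] := eqVneq (mu set0) 0; exfalso.
have hp : 0 < `|mu set0| by rewrite normr_gt0.
have [N k] := hs _ hp.
have := k N.+2 (leqW (leqnSn N)).
rewrite sumr_const card_ord mulrSr addrK normrMn mulrS.
move=> hh; have : `|mu set0| <= `|mu set0| + `|mu set0| *+ N.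
  by rewrite lerDl mulrn_wge0.
by move=> hh2; have := lt_le_trans hh hh2; rewrite ltxx.
Qed.

Lemma mu_add E : measurable E -> mu E + mu (~` E) = mu setT.
Proof.
move=> mE.
pose F : nat -> set X := fun n => if n == 0%N then E else if n == 1%N then ~` E else set0.
have mF : forall n, measurable (F n).
  by move=> [|[|n]] //=; [exact: measurableC|exact: measurable0].
have tF : trivIset setT F.
  move=> i j _ _ [x [hi hj]].
  by case: i j hi hj => [|[|i]] [|[|j]] //= hi hj.
have uF : \bigcup_n F n = setT.
  apply/seteqP; split => // x _.
  case: (classic (E x)) => hx; first by exists 0%N.
  by exists 1%N.
have := hmu mF tF; rewrite uF => hs.
apply: (series_unique _ hs) => e ep; exists 2%N => n hn.
rewrite -(subnKC hn) big_split_ord /= big_ord_recl big_ord1 big1 ?addr0.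
  by rewrite /F /= subrr normr0.
by move=> i _; rewrite /F /= mu0.
Qed.
End Meas.

End Part6.
Import Part6.

Module Part7.
Local Open Scope ring_scope.
Local Open Scope classical_set_scope.

Section Instr.
Variable R : realType.
Local Notation C := R[i].
Local Notation Re := (@complex.Re R).
Variables (d : measure_display) (X : measurableType d).
Variables (A : algType C) (star : A -> A) (nA : A -> C).
Hypothesis hA : unital_Cstar_algebra star nA.
Variables (H : lmodType C) (ip : H -> H -> C).
Hypothesis hH : hilbert_space ip.
Local Notation N2 := (N2 ip).
Variable I : set X -> A -> H -> H.
Hypothesis hI : spectral_instrument star ip I.
Variable n : nat.
Variables (T : 'I_n -> H -> H) (J : 'I_n -> set X -> A -> H -> H).
Hypothesis hJ : forall i, UCP_instrument star ip (J i).
Hypothesis hsum : forall h k, \sum_(i < n) ip (T i h) (T i k) = ip h k.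
Hypothesis hdec : forall E, measurable E -> forall a h k,
       ip h (I E a k) = \sum_(i < n) ip (T i h) (J i E a (T i k)).

Lemma J_cp i E : measurable E -> CP_map star ip (J i E).
Proof. by case: (hJ i) => -[h _] _; apply: h. Qed.

Lemma J_le1 i E : measurable E -> forall x, Re (ip x (J i E 1 x)) <= N2 x.
Proof.
move=> mE x.
have [[_ hca] hu] := hJ i.
have := mu_add (hca 1 x x) mE; rewrite hu => e.
have h2 := cp_diag2 hA hH (J_cp i (measurableC mE)) x.
have := ge0_Re h2; rewrite /N2 -e cReD; lra.
Qed.

Lemma I_hom E : measurable E -> star_hom star ip (I E).
Proof. by case: hI => _ h; apply: h. Qed.

Lemma intertwine E : measurable E -> forall i a h, J i E a (T i h) = T i (I E a h).
Proof.
move=> mE.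
have [_ _ hmul hadj] := I_hom mE.
move=> i0 a h.
set v := I E a h.
pose x i := J i E a (T i h); pose y i := T i v.
have hx : forall i, N2 (x i) <= Re (ip (T i h) (J i E (star a * a) (T i h))).
  move=> i; apply: (kadison hA hH (J_cp i mE)); exact: J_le1.
have s1 : \sum_(i < n) N2 (x i) <= N2 v.
  apply: le_trans (ler_sum _ (fun i _ => hx i)) _.
  rewrite -cRe_sum -hdec // hmul -hadj -/v //.
have s2 : \sum_(i < n) N2 (y i) = N2 v.
  by rewrite /N2 -cRe_sum hsum.
have s3 : \sum_(i < n) Re (ip (x i) (y i)) = N2 v.
  rewrite -cRe_sum.
  have -> : \sum_(i < n) ip (x i) (y i) = (\sum_(i < n) ip (y i) (x i))^*.
    by rewrite rmorph_sum; apply: eq_bigr => i _; rewrite (ipC hH (y i)).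
  by rewrite -hdec // cReJ.
have tot : \sum_(i < n) N2 (x i - y i) = 0.
  apply/eqP; rewrite eq_le sumr_ge0 ?andbT; last by move=> i _; apply: N2_ge0.
  under eq_bigr => i _ do rewrite (N2B hH).
  rewrite sumrB big_split /= -mulr_sumr s2 s3; lra.
have := (psumr_eq0P (fun i _ => N2_ge0 hH (x i - y i)) tot) i0 erefl.
move/(N2_eq0 hH)/eqP; rewrite subr_eq0 => /eqP.
done.
Qed.

End Instr.

End Part7.
Import Part7.

Module Part8.
Local Open Scope ring_scope.

Section Sqrt.
Variable R : realType.
Local Notation C := R[i].
Local Notation Re := (@complex.Re R).
Variables (H : lmodType C) (ip : H -> H -> C).
Hypothesis hH : hilbert_space ip.
Local Notation N2 := (N2 ip).
Local Notation nm := (nm ip).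
Local Notation cvg := (cvg ip).

Lemma nm_le_of_N2 x (c : R) : 0 <= c -> N2 x <= c ^+ 2 -> nm x <= c.
Proof. move=> c0 h; rewrite -(ler_pXn2r (n:=2)) ?nnegrE ?nm_ge0 // nm2 //. Qed.
Lemma N2_le_of_nm x (c : R) : 0 <= c -> nm x <= c -> N2 x <= c ^+ 2.
Proof. move=> c0 h; rewrite -(nm2 hH) (ler_pXn2r (n:=2)) ?nnegrE ?nm_ge0 //. Qed.
Lemma nmZR (c : R) x : nm ((c%:C%C) *: x) = `|c| * nm x.
Proof.
rewrite /nm (N2Z hH) /sq cReR cImR expr0n addr0 sqrtrM ?sqr_ge0 //.
by rewrite sqrtr_sqr.
Qed.
Lemma nm0 : nm 0 = 0. Proof. by rewrite /nm (N2_0 hH) sqrtr0. Qed.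

Lemma linopI (K : H -> H) : (forall x y, K (x + y) = K x + K y) ->
  (forall (c : C) x, K (c *: x) = c *: K x) -> linop K.
Proof. by move=> hD hZ c x y; rewrite hD hZ. Qed.

Lemma cvgZ (c : C) u x : cvg u x -> cvg (fun k => c *: u k) (c *: x).
Proof.
move=> hu; have hl : linop (fun v : H => c *: v).
  by move=> a y z; rewrite scalerDr !scalerA mulrC.
have hb : bnd ip (fun v => c *: v) (sq c) by move=> v; rewrite (N2Z hH).
exact: (cvg_lin hH hl hb (sq_ge0 c) hu).
Qed.

Lemma N2_closed u x (c : R) : 0 <= c -> cvg u x -> (forall k, N2 (u k) <= c) -> N2 x <= c.
Proof.
move=> c0 hu hb.
rewrite -(sqr_sqrtr c0); apply: N2_le_of_nm; first exact: sqrtr_ge0.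
apply: small_le => e ep.
have e2 : 0 < e ^+ 2 by apply: exprn_gt0.
have [N hN] := hu _ e2.
have h1 : nm (x - u N) < e by apply: (nm_lt hH) => //; rewrite -(N2N hH) opprB; apply: hN.
have h2 : nm (u N) <= Num.sqrt c.
  apply: nm_le_of_N2; first exact: sqrtr_ge0. by rewrite sqr_sqrtr.
have := nmD hH (u N) (x - u N); rewrite addrC subrK; lra.
Qed.

Variables (T Tinv T' Ti' : H -> H).
Hypotheses (lT : linop T) (lTinv : linop Tinv) (lT' : linop T') (lTi' : linop Ti').
Hypothesis T1 : forall x, N2 (T x) <= N2 x.
Variable K : R.
Hypotheses (K0 : 0 <= K) (bTinv : bnd ip Tinv K).
Variables (K' KT' : R).
Hypotheses (K'0 : 0 <= K') (bTi' : bnd ip Ti' K') (KT'0 : 0 <= KT') (bT' : bnd ip T' KT').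
Hypotheses (TK : cancel T Tinv) (TKi : cancel Tinv T).
Hypothesis adjT : forall x y, ip (T x) y = ip x (T' y).
Hypothesis adjTi : forall x y, ip (Tinv x) y = ip x (Ti' y).

Definition P x := T' (T x).
Lemma linP : linop P. Proof. exact: linop_comp. Qed.
Lemma ipP x y : ip x (P y) = ip (T x) (T y).
Proof. by rewrite /P adjT. Qed.
Lemma Psa x y : ip (P x) y = ip x (P y).
Proof. by rewrite ipP (ipC hH) ipP -(ipC hH). Qed.
Lemma P_N2 x : N2 (P x) <= N2 (T x).
Proof.
have := CS hH (T (P x)) (T x); rewrite -ipP (ipN2 hH) /sq cReR cImR expr0n addr0.
have := T1 (P x); have := N2_ge0 hH (P x); have := N2_ge0 hH (T x) => a b c e.
have f : N2 (P x) ^+ 2 <= N2 (P x) * N2 (T x).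
  apply: le_trans e _; apply: ler_wpM2r => //.
have [n0|np] := eqVneq (N2 (P x)) 0; first by rewrite n0.
have np' : 0 < N2 (P x) by rewrite lt_def np b.
rewrite -(ler_pM2r np'); rewrite expr2 in f; lra.
Qed.
Lemma T_low x : N2 x <= (K + 1) * N2 (T x).
Proof.
have := bTinv (T x); rewrite TK => h; apply: le_trans h _.
apply: ler_wpM2r; [exact: N2_ge0 | lra].
Qed.

Definition B x := x - P x.
Lemma lin_B : linop B.
Proof. by move=> c x y; rewrite /B linP scalerBr opprD addrACA. Qed.
Lemma Bsa x y : ip (B x) y = ip x (B y).
Proof. by rewrite /B (ipBl hH) (ipBr hH) Psa. Qed.

Definition q : R := 1 - (K + 1)^-1.
Lemma q01 : 0 <= q < 1.
Proof.
have kp : 0 < K + 1 by have := K0; lra.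
have h1 : (K + 1)^-1 <= 1 by rewrite invf_le1 //; have := K0; lra.
have h2 : 0 < (K + 1)^-1 by rewrite invr_gt0.
by rewrite /q; apply/andP; split; lra.
Qed.
Lemma B_N2 x : N2 (B x) <= q * N2 x.
Proof.
rewrite /B (N2B hH) ipP (ipN2 hH) cReR.
have := P_N2 x; have := T_low x => a b.
have kp : 0 < K + 1 by have := K0; lra.
have : (K + 1)^-1 * N2 x <= N2 (T x).
  by rewrite ler_pdivrMl // mulrC.
rewrite /q; lra.
Qed.
Definition rho : R := Num.sqrt q.
Lemma rho01 : 0 <= rho < 1.
Proof.
have /andP[a b] := q01; apply/andP; split; first exact: sqrtr_ge0.
by rewrite /rho -sqrtr1 ltr_sqrt.
Qed.
Lemma B_nm x : nm (B x) <= rho * nm x.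
Proof.
have /andP[a b] := rho01.
apply: nm_le_of_N2; first by apply: mulr_ge0 => //; apply: nm_ge0.
rewrite exprMn (nm2 hH) /rho sqr_sqrtr; [exact: B_N2 | by case/andP: q01].
Qed.

Definition r : R := 1 - Num.sqrt (1 - rho).
Lemma r01 : 0 <= r < 1.
Proof.
have /andP[a b] := rho01.
have s1 : Num.sqrt (1 - rho) <= 1 by rewrite -[X in _ <= X]sqrtr1 ler_sqrt; lra.
have s2 : 0 < Num.sqrt (1 - rho) by rewrite sqrtr_gt0; lra.
by rewrite /r; apply/andP; split; lra.
Qed.
Lemma r_fix : 2^-1 * (rho + r * r) = r.
Proof.
have /andP[a b] := rho01.
have e : Num.sqrt (1 - rho) ^+ 2 = 1 - rho by rewrite sqr_sqrtr; lra.
rewrite /r; set s := Num.sqrt _ in e *.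
have -> : rho = 1 - s ^+ 2 by lra.
by field.
Qed.

Definition h2 : C := (2^-1 : R)%:C%C.

Fixpoint Y (k : nat) (x : H) : H :=
  if k is k'.+1 then h2 *: (B x + Y k' (Y k' x)) else 0.

Lemma Ylin k : linop (Y k).
Proof.
elim: k => [|k IH]; first by move=> c x y /=; rewrite scaler0 addr0.
apply: linopI => [x y|c x] /=.
  by rewrite (linD lin_B) !(linD IH) -scalerDr addrACA.
by rewrite (linZ lin_B) !(linZ IH) -scalerDr scalerA mulrC -scalerA.
Qed.

Lemma Ybnd k x : nm (Y k x) <= r * nm x.
Proof.
have /andP[r0 r1] := r01; have /andP[p0 p1] := rho01.
elim: k x => [|k IH] x /=; first by rewrite nm0; apply: mulr_ge0 => //; apply: nm_ge0.
rewrite nmZR.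
have := nmD hH (B x) (Y k (Y k x)); have := B_nm x; have := IH (Y k x); have := IH x.
have := nm_ge0 ip x => a b c d e.
have hr : `|2^-1 : R| = 2^-1 by rewrite ger0_norm // invr_ge0.
rewrite hr -[X in _ <= X * _]r_fix.
have f : nm (Y k (Y k x)) <= r * (r * nm x) by apply: le_trans c _; apply: ler_wpM2l.
have g : nm (B x + Y k (Y k x)) <= (rho + r * r) * nm x by lra.
rewrite -mulrA; apply: ler_wpM2l => //; rewrite invr_ge0; lra.
Qed.

Lemma YcommB (Kop : H -> H) : linop Kop -> (forall x, Kop (B x) = B (Kop x)) ->
  forall k x, Kop (Y k x) = Y k (Kop x).
Proof.
move=> lK hK; elim=> [|k IH] x /=; first exact: lin0.
by rewrite (linZ lK) (linD lK) hK !IH.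
Qed.
Lemma YB k x : Y k (B x) = B (Y k x).
Proof. by rewrite (YcommB lin_B). Qed.
Lemma Ycomm j k x : Y j (Y k x) = Y k (Y j x).
Proof. by rewrite (YcommB (Ylin j)) // => y; rewrite YB. Qed.
Lemma Ysa k x y : ip (Y k x) y = ip x (Y k y).
Proof.
elim: k x y => [|k IH] x y /=; first by rewrite (ip0l hH) (ip0r hH).
by rewrite (ipZl hH) (ipZr hH) /h2 conjR (ipDl hH) (ipDr hH) Bsa !IH.
Qed.

Definition D k x := Y k.+1 x - Y k x.
Lemma YS k x : Y k.+1 x = h2 *: (B x + Y k (Y k x)).
Proof. by []. Qed.
Lemma D_step k x : D k.+1 x = h2 *: (Y k.+1 (D k x) + Y k (D k x)).
Proof.
move: (YS k.+1 x) (YS k x) => E1 E2.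
rewrite /D E1 (linB (Ylin k.+1)) (linB (Ylin k)) (Ycomm k k.+1 x).
rewrite [X in _ - X = _]E2 -scalerBr; congr (_ *: _).
by rewrite [in RHS]addrA subrK opprD addrACA subrr add0r.
Qed.

Lemma zm1 (x y z b p : H) : z + b = y + y -> b = x - p -> (x - y) - (y - z) = p.
Proof. move=> hz hb; rewrite opprB addrACA -opprD -hz addrKA hb subKr //. Qed.

Lemma nmZh v : nm (h2 *: v) = 2^-1 * nm v.
Proof. by rewrite nmZR ger0_norm // invr_ge0. Qed.

Lemma D_bnd k x : nm (D k x) <= nm x * r ^+ k.
Proof.
have /andP[r0 r1] := r01.
elim: k => [|k IH].
  rewrite /D /= subr0 expr0 mulr1; apply: le_trans (Ybnd 1 x) _.
  have := nm_ge0 ip x; nra.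
rewrite D_step nmZh exprS.
have := nmD hH (Y k.+1 (D k x)) (Y k (D k x)); have := Ybnd k.+1 (D k x); have := Ybnd k (D k x).
move=> a b c.
have e : nm (Y k.+1 (D k x) + Y k (D k x)) <= (r + r) * nm (D k x) by lra.
have f : (r + r) * nm (D k x) <= (r + r) * (nm x * r ^+ k) by apply: ler_wpM2l => //; lra.
have g : 2^-1 * nm (Y k.+1 (D k x) + Y k (D k x)) <= 2^-1 * ((r + r) * (nm x * r ^+ k)).
  by apply: ler_wpM2l; [rewrite invr_ge0 | apply: le_trans e f].
apply: le_trans g _.
have -> : 2^-1 * ((r + r) * (nm x * r ^+ k)) = nm x * (r * r ^+ k) by field.
by [].
Qed.

Lemma Ycauchy x : cauchy ip (fun k => Y k x).
Proof.
apply: (geom_cauchy hH (K := nm x) (r := r)); [exact: nm_ge0 | exact: r01 |].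
move=> k; exact: D_bnd.
Qed.

Definition Yl x := proj1_sig (constructive_indefinite_description _ (complete hH (Ycauchy x))).
Lemma Yl_cvg x : cvg (fun k => Y k x) (Yl x).
Proof. by rewrite /Yl; case: constructive_indefinite_description. Qed.

Lemma Yl_lin : linop Yl.
Proof.
move=> c x y; apply: (cvg_unique hH (Yl_cvg (c *: x + y))).
apply: (cvg_eq (u := fun k => c *: Y k x + Y k y)) => [k|]; first by rewrite (Ylin k).
exact: (cvgD hH (cvgZ c (Yl_cvg x)) (Yl_cvg y)).
Qed.

Lemma Y_N2 k v : N2 (Y k v) <= N2 v.
Proof.
have /andP[r0 r1] := r01.
have := N2_le_of_nm (c := r * nm v) _ (Ybnd k v).
rewrite exprMn (nm2 hH) => h; apply: le_trans (h _) _.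
  by apply: mulr_ge0 => //; apply: nm_ge0.
have : r ^+ 2 <= 1 by rewrite expr2; nra.
have := N2_ge0 hH v; nra.
Qed.

Lemma Yl_bnd x : N2 (Yl x) <= N2 x.
Proof.
apply: (N2_closed (N2_ge0 hH x) (Yl_cvg x)) => k; exact: Y_N2.
Qed.

Lemma Yl_sa x y : ip (Yl x) y = ip x (Yl y).
Proof.
have c1 := ccvg_ipl hH y (Yl_cvg x).
have c2 := ccvg_ipr hH x (Yl_cvg y).
apply: (ccvg_unique c1); apply: ccvg_eq c2 => k; by rewrite Ysa.
Qed.

Lemma Yl_comm (Kop : H -> H) M : linop Kop -> 0 <= M -> bnd ip Kop M ->
  (forall x, Kop (B x) = B (Kop x)) -> forall x, Kop (Yl x) = Yl (Kop x).
Proof.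
move=> lK M0 bK hK x.
have c1 := cvg_lin hH lK bK M0 (Yl_cvg x).
apply: (cvg_unique hH c1); apply: cvg_eq (Yl_cvg (Kop x)) => k /=.
by rewrite (YcommB lK hK).
Qed.

Lemma YY_cvg x : cvg (fun k => Y k (Y k x)) (Yl (Yl x)).
Proof.
move=> e ep; have e4 : 0 < e / 4 by lra.
have [N1 h1] := Yl_cvg x e4; have [N2' h2] := Yl_cvg (Yl x) e4.
exists (maxn N1 N2') => k hk.
have a := h1 k (leq_trans (leq_maxl _ _) hk); have b := h2 k (leq_trans (leq_maxr _ _) hk).
have -> : Y k (Y k x) - Yl (Yl x) = Y k (Y k x - Yl x) + (Y k (Yl x) - Yl (Yl x)).
  by rewrite (linB (Ylin k)) addrA subrK.
apply: le_lt_trans (N2_par hH _ _) _.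
have := Y_N2 k (Y k x - Yl x); lra.
Qed.

Lemma Yl_fix x : Yl x = h2 *: (B x + Yl (Yl x)).
Proof.
have c1 := cvg_shift (Yl_cvg x).
have c2 : cvg (fun k => Y k.+1 x) (h2 *: (B x + Yl (Yl x))).
  apply: (cvg_eq (u := fun k => h2 *: (B x + Y k (Y k x)))) => //.
  exact: (cvgZ h2 (cvgD hH (cvg_const hH (B x)) (YY_cvg x))).
exact: (cvg_unique hH c1 c2).
Qed.

Lemma Yl_fix2 x : Yl (Yl x) + B x = Yl x + Yl x.
Proof.
have e : Yl x + Yl x = ((1 + 1) * h2) *: (B x + Yl (Yl x)).
  by rewrite -scalerA -Yl_fix scalerDl scale1r.
have h : (1 + 1) * h2 = 1.
  by rewrite /h2 -Rc1 -RcD -RcM; congr (_%:C%C); field.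
by rewrite h scale1r in e; rewrite e addrC.
Qed.

Definition V x := x - Yl x.
Lemma V_lin : linop V.
Proof. by move=> c x y; rewrite /V Yl_lin scalerBr opprD addrACA. Qed.
Lemma V_sa x y : ip (V x) y = ip x (V y).
Proof. by rewrite /V (ipBl hH) (ipBr hH) Yl_sa. Qed.
Lemma VV x : V (V x) = P x.
Proof.
rewrite {1}/V (linB Yl_lin) /V; apply: (zm1 (Yl_fix2 x)).
by [].
Qed.
Lemma V_bnd : bnd ip V 4.
Proof.
move=> x; rewrite /V; apply: le_trans (N2_par hH _ _) _.
rewrite (N2N hH); have := Yl_bnd x; lra.
Qed.
Lemma V_comm (Kop : H -> H) M : linop Kop -> 0 <= M -> bnd ip Kop M ->
  (forall x, Kop (P x) = P (Kop x)) -> forall x, Kop (V x) = V (Kop x).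
Proof.
move=> lK M0 bK hK x.
have hB : forall x, Kop (B x) = B (Kop x) by move=> y; rewrite /B (linB lK) hK.
by rewrite /V (linB lK) (Yl_comm lK M0 bK hB).
Qed.

Definition Pinv x := Tinv (Ti' x).
Lemma Pinv_lin : linop Pinv. Proof. exact: linop_comp. Qed.
Lemma Pinv_bnd : bnd ip Pinv (K * K').
Proof. exact: bnd_comp. Qed.
Lemma PPinv x : P (Pinv x) = x.
Proof.
apply: (ip_ext hH) => y.
by rewrite ipP /Pinv TKi -adjTi TK.
Qed.
Lemma P_inj x : P x = 0 -> x = 0.
Proof.
move=> h; have := ipP x x; rewrite h (ip0r hH) (ipN2 hH) => /esym/eqP.
rewrite -Rc0 => /eqP /RcI /(N2_eq0 hH) Tx.
by rewrite -(TK x) Tx (lin0 lTinv).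
Qed.
Lemma PinvP x : Pinv (P x) = x.
Proof.
apply/eqP; rewrite -subr_eq0; apply/eqP; apply: P_inj.
by rewrite (linB linP) PPinv subrr.
Qed.
Definition W x := V (Pinv x).
Lemma VW x : V (W x) = x.
Proof. by rewrite /W VV PPinv. Qed.
Lemma WV x : W (V x) = x.
Proof.
have M0 : 0 <= K * K' by apply: mulr_ge0; [have := K0 | have := K'0].
have hc : forall y, Pinv (P y) = P (Pinv y) by move=> y; rewrite PinvP PPinv.
by rewrite /W (V_comm Pinv_lin M0 Pinv_bnd hc) VV PPinv.
Qed.
End Sqrt.

Section Pack.
Variable R : realType.
Local Notation C := R[i].
Variables (H : lmodType C) (ip : H -> H -> C).
Hypothesis hH : hilbert_space ip.
Local Notation N2 := (N2 ip).

Lemma sqrt_pack (T Tinv T' Ti' : H -> H) K K' KT' :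
  linop T -> linop Tinv -> linop T' -> linop Ti' ->
  (forall x, N2 (T x) <= N2 x) ->
  0 <= K -> bnd ip Tinv K -> 0 <= K' -> bnd ip Ti' K' -> 0 <= KT' -> bnd ip T' KT' ->
  cancel T Tinv -> cancel Tinv T ->
  (forall x y, ip (T x) y = ip x (T' y)) -> (forall x y, ip (Tinv x) y = ip x (Ti' y)) ->
  exists V W : H -> H,
    [/\ linop V /\ bnd ip V 4, linop W /\ (exists M, 0 <= M /\ bnd ip W M),
        (forall x y, ip (V x) y = ip x (V y)) /\ (forall x, V (V x) = T' (T x)),
        cancel V W /\ cancel W V &
        (forall Kop M, linop Kop -> 0 <= M -> bnd ip Kop M ->
          (forall x, Kop (T' (T x)) = T' (T (Kop x))) -> forall x, Kop (V x) = V (Kop x))].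
Proof.
move=> lT lTinv lT' lTi' T1 K0 bTinv K'0 bTi' KT'0 bT' TK TKi adjT adjTi.
exists (V hH lT lT' T1 K0 bTinv TK adjT).
exists (W hH Ti' lT lT' T1 K0 bTinv TK adjT).
split.
- split; [exact: V_lin | exact: V_bnd].
- split; first by apply: linop_comp; [exact: V_lin | exact: Pinv_lin].
  exists (4 * (K * K')); split; first by apply: mulr_ge0 => //; apply: mulr_ge0.
  apply: bnd_comp => //; [exact: V_bnd | exact: Pinv_bnd].
- split; [exact: V_sa | exact: VV].
- split; [exact: (WV hH lT lTinv lT' lTi' T1 K0 bTinv K'0 bTi' TK TKi adjT adjTi) | exact: (VW hH lT lT' T1 K0 bTinv TK TKi adjT adjTi)].
- move=> Kop M lK M0 bK hK x; exact: (V_comm hH lT lT' T1 K0 bTinv TK adjT lK M0 bK hK).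
Qed.
End Pack.

End Part8.
Import Part8.

Unset Implicit Arguments.
Set Strict Implicit.
Local Open Scope ring_scope.

Theorem corollary3p9 (R : realType) (d : measure_display)
  (X : measurableType d) (A : algType R[i]) (star : A -> A)
  (nA : A -> R[i]) (H : lmodType R[i]) (ip : H -> H -> R[i])
  (hA : unital_Cstar_algebra star nA) (hH : hilbert_space ip)
  (I : set X -> A -> H -> H) :
  spectral_instrument star ip I -> Cstar_extreme star ip I.
Proof.
move=> hI n T J hT hJ hsum hdec.
have hU : forall i, exists U : H -> H, unitary_op ip U /\
    (forall E, measurable E -> forall a h k, ip h (J i E a k) = ip (U h) (I E a (U k))).
  move=> i.
  have [hb [S [hbS [TS ST]]]] := hT i.
  have [lT [MT [MT0 bT]]] := bounded_opP hH hb.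
  have [lS [K [K0 bS]]] := bounded_opP hH hbS.
  have T1 : forall x, N2 ip (T i x) <= N2 ip x.
    move=> x; have := congr1 (@complex.Re R) (hsum x x); rewrite cRe_sum => e.
    rewrite {2}/N2 -e (bigD1 i) //= lerDl; apply: sumr_ge0 => j _; exact: N2_ge0.
  have [T' [lT' bT' adjT]] := adjoint hH lT MT0 bT.
  have [S' [lS' bS' adjS]] := adjoint hH lS K0 bS.
  have [V [W [[lV bV] [lW [MW [MW0 bW]]] [Vsa VV] [VW WV] Vc]]] :=
    sqrt_pack hH lT lS lT' lS' T1 K0 bS K0 bS' MT0 bT' TS ST adjT adjS.
  exists (V \o S); split.
    split.
      apply: (bounded_opI hH (linop_comp lV lS) _ (bnd_comp _ bV bS)).
        by apply: mulr_ge0 => //.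
      by [].
    exists (T i \o W); split.
    - exact: (bounded_opI hH (linop_comp lT lW) (mulr_ge0 MT0 MW0) (bnd_comp MT0 bT bW)).
    - move=> h k /=; rewrite Vsa.
      have -> : V k = V (V (W k)) by rewrite WV.
      by rewrite VV -adjT ST.
    - by move=> h /=; rewrite VW ST.
    - by move=> k /=; rewrite TS WV.
  move=> E mE a h k.
  have [lp bp hmul hadj] := I_hom hI mE.
  have [lpa [Ma [Ma0 bpa]]] := bounded_opP hH (bp a).
  have itw := intertwine hA hH hI hJ hsum hdec mE.
  have hcomm : forall x, I E a (T' (T i x)) = T' (T i (I E a x)).
    move=> x; apply: (ip_ext hH) => y.
    rewrite -adjT -itw (herm_adj hA hH (J_cp hJ i mE)) itw adjT hadj (starK hA) //.
  have Vc' := Vc _ _ lpa Ma0 bpa hcomm.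
  rewrite /=.
  have -> : J i E a k = T i (I E a (S k)) by rewrite -itw ST.
  by rewrite Vsa -Vc' VV hcomm -adjT ST.
exists (fun i => proj1_sig (constructive_indefinite_description _ (hU i))) => i.
by case: constructive_indefinite_description.
Qed.
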